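(* Let $b,w\ge0$ be integers and let $d_1,\dots,d_{b+1},e_1,\dots,e_{w+1}\in\mathbb N$ satisfy $d_1+\dots+d_{b+1}=b+w+1=e_1+\dots+e_{w+1}$. Let $S$ be the set of spanning trees $t$ of the complete bipartite graph $K_{b+1,w+1}$ with parts $\{a_1,\dots,a_{b+1}\}$ and $\{c_1,\dots,c_{w+1}\}$ such that $t$ contains the edge $\{a_1,c_1\}$, $\deg_t(a_i)=d_i$ for all $i\le b+1$ and $\deg_t(c_j)=e_j$ for all $j\le w+1$. Then $$\#S=\binom{b}{e_1-1,\dots,e_{w+1}-1}\binom{w}{d_1-1,\dots,d_{b+1}-1}\times\begin{cases}1-\dfrac{(b-e_1+1)(w-d_1+1)}{bw},&\text{if }w,b>0,\\[2mm]1,&\text{if }w=0\text{ or }b=0.\end{cases}$$ By symmetry, the same holds when the edge $\{a_1,c_1\}$ is replaced by any prescribed edge $\{a_k,c_m\}$, with $d_1,e_1$ replaced by $d_k,e_m$.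
   Context: $\binom{n}{k_1,\dots,k_r}$ denotes the multinomial coefficient $\frac{n!}{k_1!\cdots k_r!}$ (for $k_1+\dots+k_r=n$). Spanning trees are subgraphs of $K_{b+1,w+1}$ on all $b+w+2$ vertices that are trees; $\deg_t$ is the degree in $t$. *)

(* Defs.v *)
From HB Require Import structures.
From mathcomp Require Import all_boot all_order all_algebra.
From mathcomp Require Import boolp.
Set Implicit Arguments. Unset Strict Implicit. Unset Printing Implicit Defensive.
Import Order.TTheory GRing.Theory Num.Theory.

(* Complete bipartite graph K_{b+1,w+1}: vertices a_i (i : 'I_b.+1) and
   c_j (j : 'I_w.+1); the edge {a_i, c_j} is the pair (i, j).
   A spanning subgraph is a set of such edges. *)
Definition vert (b w : nat) := ('I_b.+1 + 'I_w.+1)%type.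
Definition edge (b w : nat) := ('I_b.+1 * 'I_w.+1)%type.

Definition adj (b w : nat) (t : {set edge b w}) : rel (vert b w) :=
  fun x y => match x, y with
             | inl i, inr j => (i, j) \in t
             | inr j, inl i => (i, j) \in t
             | _, _ => false
             end.

Definition connected (b w : nat) (t : {set edge b w}) : Prop :=
  forall x y : vert b w, connect (adj t) x y.

Definition acyclic (b w : nat) (t : {set edge b w}) : Prop :=
  forall p : seq (vert b w), uniq p -> 2 < size p -> ~~ cycle (adj t) p.

Definition is_spanning_tree (b w : nat) (t : {set edge b w}) : Prop :=
  connected t /\ acyclic t.

Definition deg_a (b w : nat) (t : {set edge b w}) (i : 'I_b.+1) : nat :=
  #|[set j : 'I_w.+1 | (i, j) \in t]|.
Definition deg_c (b w : nat) (t : {set edge b w}) (j : 'I_w.+1) : nat :=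
  #|[set i : 'I_b.+1 | (i, j) \in t]|.

(* Multinomial coefficient n!/(k_1!...k_r!) with integer entries;
   by convention it is 0 unless all k_i >= 0 and they sum to n. *)
Definition multinom (I : finType) (n : nat) (k : I -> int) : nat :=
  if [forall i, (0 <= k i)%R] && ((\sum_i k i)%R == Posz n)
  then n`! %/ \prod_i (`|k i|%N)`!
  else 0.

Definition S_set (b w : nat) (d : 'I_b.+1 -> nat) (e : 'I_w.+1 -> nat)
    (k : 'I_b.+1) (m : 'I_w.+1) : {set {set edge b w}} :=
  [set t : {set edge b w} |
     `[< is_spanning_tree t /\ (k, m) \in t /\
         (forall i, deg_a t i = d i) /\ (forall j, deg_c t j = e j) >]].

(* Main.v *)
Require Import Defs.
From mathcomp Require Import all_boot all_order all_algebra.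
From mathcomp Require Import boolp.
From mathcomp Require Import ring lra zify.
Import Order.TTheory GRing.Theory Num.Theory.
Set Implicit Arguments. Unset Strict Implicit. Unset Printing Implicit Defensive.

Section G.
Variables A B : finType.
Implicit Types (t F : {set A * B}) (Va : {set A}) (Vc : {set B}).

Definition gadj t : rel (A + B) := fun x y => match x, y with
  | inl i, inr j => (i, j) \in t
  | inr j, inl i => (i, j) \in t
  | _, _ => false end.
Definition inV Va Vc (x : A + B) := match x with inl i => i \in Va | inr j => j \in Vc end.
Definition gtree Va Vc t := [/\ t \subset setX Va Vc,
   (forall x y, inV Va Vc x -> inV Va Vc y -> connect (gadj t) x y) &
   (forall p : seq (A+B), uniq p -> 2 < size p -> ~~ cycle (gadj t) p)].
Definition degA t i := #|[set j | (i,j) \in t]|.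
Definition degC t j := #|[set i | (i,j) \in t]|.
Definition gS Va Vc (d : A -> nat) (e : B -> nat) F : {set {set A*B}} :=
  [set t | `[< gtree Va Vc t /\ F \subset t /\ (forall i, i \in Va -> degA t i = d i)
             /\ (forall j, j \in Vc -> degC t j = e j) >]].

Lemma gadj_sym t : symmetric (gadj t).
Proof. by case=> [i|j] [i'|j']. Qed.

Lemma gconnect_sym t : connect_sym (gadj t).
Proof. exact: sym_connect_sym (gadj_sym t). Qed.

Lemma cycle_two_nb t p v : uniq p -> 2 < size p -> cycle (gadj t) p -> v \in p ->
  exists u1 u2, [/\ u1 != u2, gadj t v u1 & gadj t v u2].
Proof.
move=> up sp cp vp; case: (rot_to vp) => i r Er.
have : uniq (v :: r) by rewrite -Er rot_uniq.
have : cycle (gadj t) (v :: r) by rewrite -Er rot_cycle.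
have : 2 < size (v :: r) by rewrite -Er size_rot.
case: r {Er} => [|u1 [|y r']] //= _.
move=> /and3P [e1 _]; rewrite rcons_path => /andP [_ e2] /and3P [_ u1n _].
exists u1, (last y r'); split => //; last by rewrite gadj_sym.
apply: contraNneq u1n => ->; exact: mem_last.
Qed.

Lemma subset_edge t Va Vc i j : t \subset setX Va Vc -> (i, j) \in t -> i \in Va /\ j \in Vc.
Proof. by move=> /subsetP H /H; rewrite inE => /andP. Qed.

Lemma deg_posA Va Vc t i j0 : gtree Va Vc t -> i \in Va -> j0 \in Vc -> exists j, (i, j) \in t.
Proof.
case=> _ C _ iV jV; have /connectP [p pp E] := C (inl i) (inr j0) iV jV.
case: p pp E => [|[i'|j] p] //= /andP [h _] _; by exists j.
Qed.

Lemma deg_posC Va Vc t j i0 : gtree Va Vc t -> j \in Vc -> i0 \in Va -> exists i, (i, j) \in t.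
Proof.
case=> _ C _ jV iV; have /connectP [p pp E] := C (inr j) (inl i0) jV iV.
case: p pp E => [|[i|j'] p] //= /andP [h _] _; by exists i.
Qed.

Lemma tree_add Va Vc t i j : i \in Va -> j \in Vc -> gtree (Va :\ i) Vc t ->
  gtree Va Vc ((i, j) |: t).
Proof.
move=> iV jV [S C Ac].
have noi : forall j', (i, j') \notin t.
  by move=> j'; apply/negP => /(subset_edge S) []; rewrite !inE eqxx.
have nbi : forall u, gadj ((i, j) |: t) (inl i) u -> u = inr j.
  case=> [i'|j'] //=; rewrite !inE (negbTE (noi j')) orbF xpair_eqE eqxx /=.
  by move/eqP ->.
have sub : subrel (gadj t) (gadj ((i, j) |: t)).
  by case=> [a|b] [a'|b'] //= H; rewrite inE H orbT.
have lift : forall x y, connect (gadj t) x y -> connect (gadj ((i, j) |: t)) x y.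
  move=> x y; apply: connect_sub => u v H; apply: connect1; exact: sub.
split.
- apply/subsetP => -[a b]; rewrite !inE xpair_eqE => /orP [/andP [/eqP -> /eqP ->]|].
    by rewrite iV jV.
  by move/(subset_edge S) => []; rewrite !inE => /andP [_ ->] ->.
- have Hi : forall z, inV Va Vc z -> connect (gadj ((i, j) |: t)) (inl i) z.
    move=> [a|b] /= zV.
      case: (eqVneq a i) => [-> //|ne].
      apply: (@connect_trans _ _ (inr j)).
        by apply: connect1 => /=; rewrite !inE eqxx.
      apply: lift; apply: C => //=; by rewrite !inE ne.
    apply: (@connect_trans _ _ (inr j)).
      by apply: connect1 => /=; rewrite !inE eqxx.
    by apply: lift; apply: C.
  move=> x y xV yV; apply: (@connect_trans _ _ (inl i)); last exact: Hi.
  by rewrite gconnect_sym; apply: Hi.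
- move=> p up sp; apply/negP => cp.
  case: (boolP (inl i \in p)) => ip.
    have [u1 [u2 [ne h1 h2]]] := cycle_two_nb up sp cp ip.
    by move: ne; rewrite (nbi _ h1) (nbi _ h2) eqxx.
  apply: (negP (Ac p up sp)); move: cp; apply: (@sub_in_cycle _ (predC1 (inl i))); last first.
    apply/allP => z zp /=; by apply: contraNneq ip => E; rewrite -E.
  move=> x y; rewrite !inE /= => xi yi; case: x y xi yi => [a|b] [a'|b'] //= xi yi; rewrite !inE.
    by case/orP => // /eqP [E _]; move: xi; rewrite E eqxx.
  by case/orP => // /eqP [E _]; move: yi; rewrite E eqxx.
Qed.

Lemma tree_rem Va Vc t i j : i \in Va -> [set j' | (i, j') \in t] = [set j] ->
  gtree Va Vc t -> gtree (Va :\ i) Vc (t :\ (i, j)).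
Proof.
move=> iV Nb [S C Ac].
have nbj : forall j', (i, j') \in t -> j' = j.
  by move=> j' h; apply/set1P; rewrite -Nb inE.
have nbi : forall u, gadj t (inl i) u -> u = inr j.
  by case=> [a|b] //= h; rewrite (nbj _ h).
split.
- apply/subsetP => -[a b]; rewrite !inE => /andP [ne h].
  have [aV bV] := subset_edge S h; rewrite bV aV !andbT /=.
  apply: contraNneq ne => E; rewrite E in h *; by rewrite (nbj _ h).
- have cv : forall z, inV (Va :\ i) Vc z -> inV Va Vc z /\ z != inl i.
    by case=> [a|b] //=; rewrite !inE => /andP [].
  move=> x y /cv [xV xi] /cv [yV yi].
  have /connectP [p pp E] := C x y xV yV; rewrite E in yi *.
  case: (shortenP pp) yi => p' pp' up' _ yi.
  apply/connectP; exists p' => //.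
  have nip : inl i \notin p'.
    apply/negP => ip; move: pp' up' yi; case/splitPr: ip => p1 p2.
    rewrite cat_path => /andP [_] /= /andP [h1].
    case: p2 => [|u p2]; first by rewrite last_cat /= eqxx.
    move=> /= /andP [h2 _] Hu _; have : uniq ((x :: p1) ++ [:: inl i, u & p2]) by [].
    rewrite cat_uniq => /and3P [_ H _].
    have e1 := nbi _ h2; rewrite gadj_sym in h1; have e2 := nbi _ h1.
    move/hasP: H; apply; exists u; first by rewrite !inE eqxx orbT.
    rewrite e1 -e2; exact: mem_last.
  move: pp'; apply: (@sub_in_path _ (predC1 (inl i))).
    move=> u v; rewrite !inE; case: u v => [a|b] [a'|b'] //= ui vi; rewrite !inE => ->;
      rewrite andbT xpair_eqE negb_and.
      by apply/orP; left; apply: contraNneq ui => ->.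
    by apply/orP; left; apply: contraNneq vi => ->.
  apply/allP => z; rewrite inE => /orP [/eqP -> //|zp] /=.
  by apply: contraNneq nip => <-.
- move=> p up sp; apply: contra (Ac p up sp); apply: sub_cycle.
  by case=> [a|b] [a'|b'] //=; rewrite inE => /andP [_ ->].
Qed.

Lemma degA_addo t i j i' : i' != i -> degA ((i, j) |: t) i' = degA t i'.
Proof. by move=> H; rewrite /degA; apply: eq_card => j'; rewrite !inE xpair_eqE (negbTE H). Qed.
Lemma degA_remo t i j i' : i' != i -> degA (t :\ (i, j)) i' = degA t i'.
Proof. by move=> H; rewrite /degA; apply: eq_card => j'; rewrite !inE xpair_eqE (negbTE H). Qed.
Lemma degC_addo t i j j' : j' != j -> degC ((i, j) |: t) j' = degC t j'.
Proof. by move=> H; rewrite /degC; apply: eq_card => i'; rewrite !inE xpair_eqE (negbTE H) andbF. Qed.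
Lemma degC_remo t i j j' : j' != j -> degC (t :\ (i, j)) j' = degC t j'.
Proof. by move=> H; rewrite /degC; apply: eq_card => i'; rewrite !inE xpair_eqE (negbTE H) andbF. Qed.
Lemma degC_add t i j : (i, j) \notin t -> degC ((i, j) |: t) j = (degC t j).+1.
Proof.
move=> H; rewrite /degC (_ : [set _ | _] = i |: [set i' | (i', j) \in t]).
  by rewrite cardsU1 inE H.
by apply/setP => i'; rewrite !inE xpair_eqE eqxx andbT.
Qed.
Lemma degA_add1 t i j : (forall j', (i, j') \notin t) -> degA ((i, j) |: t) i = 1.
Proof.
move=> H; rewrite /degA (_ : [set _ | _] = [set j]) ?cards1 //.
by apply/setP => j'; rewrite !inE xpair_eqE eqxx (negbTE (H j')) orbF.
Qed.

Lemma nb_eq t i j0 j : [set j | (i, j) \in t] = [set j0] -> ((i, j) \in t) = (j == j0).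
Proof. by move=> E; rewrite -in_set1 -E inE. Qed.

Definition upd (e : B -> nat) j := fun j' => if j' == j then (e j).-1 else e j'.

Lemma gSP Va Vc d e F t : reflect (gtree Va Vc t /\ F \subset t /\ (forall i, i \in Va -> degA t i = d i)
             /\ (forall j, j \in Vc -> degC t j = e j)) (t \in gS Va Vc d e F).
Proof. rewrite inE; exact: asboolP. Qed.

Lemma count_leafA Va Vc d e F i : i \in Va -> d i = 1 -> (forall j, j \in Vc -> 0 < e j) ->
  #|gS Va Vc d e F| = \sum_(j in Vc) #|gS (Va :\ i) Vc d (upd e j) (F :\ (i, j))|.
Proof.
move=> iV di epos.
transitivity (\sum_(t in gS Va Vc d e F) \sum_(j in Vc) (((i, j) \in t) : nat)).
  rewrite -sum1_card; apply: eq_bigr => t /gSP [T [_ [dA _]]].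
  have /cards1P [j0 Ej0] : #|[set j | (i, j) \in t]| == 1 by move: (dA i iV); rewrite /degA di => ->.
  have ij0 : (i, j0) \in t by move: (set11 j0); rewrite -Ej0 inE.
  have [S0 _ _] := T; have [_ j0V] := subset_edge S0 ij0.
  rewrite (bigD1 j0) //= ij0 big1 // => j /andP [_ ne].
  apply/eqP; rewrite eqb0; apply: contra ne => h.
  by rewrite -(nb_eq _ Ej0).
rewrite exchange_big; apply: eq_bigr => j jV.
set S' := gS (Va :\ i) Vc d (upd e j) (F :\ (i, j)).
have noij : forall t', t' \in S' -> forall j', (i, j') \notin t'.
  move=> t' /gSP [[S _ _] _] j'; apply/negP => /(subset_edge S) [].
  by rewrite !inE eqxx.
transitivity #|[set t in gS Va Vc d e F | (i, j) \in t]|.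
  rewrite -sum1_card [RHS]big_mkcond [LHS]big_mkcond /=; apply: eq_bigr => t _.
  by rewrite [in RHS]in_set; case: (t \in gS Va Vc d e F); case: ((i, j) \in t).
have -> : [set t in gS Va Vc d e F | (i, j) \in t] = (fun t' => (i, j) |: t') @: S'.
  apply/setP => t; rewrite inE; apply/idP/imsetP.
    case/andP => /gSP [T [FS [dA dC]]] ij.
    have Nb : [set j' | (i, j') \in t] = [set j].
      have /cards1P [j0 Ej0] : #|[set j | (i, j) \in t]| == 1 by move: (dA i iV); rewrite /degA di => ->.
      suff -> : j = j0 by [].
      by apply/eqP; rewrite -(nb_eq _ Ej0).
    exists (t :\ (i, j)); last by rewrite setD1K.
    apply/gSP; split; first exact: tree_rem.
    split; first by apply: setSD.
    split.
      move=> i'; rewrite !inE => /andP [ne i'V]; rewrite degA_remo //; exact: dA.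
    move=> j' j'V; rewrite /upd; case: (eqVneq j' j) => [->|ne]; last first.
      by rewrite degC_remo // dC.
    rewrite -(dC j jV) -{2}(setD1K ij) degC_add //.
    by rewrite !inE eqxx.
  case=> t' t'S ->; rewrite setU11 andbT.
  move/gSP: (t'S) => [T [FS [dA dC]]].
  apply/gSP; split; first exact: tree_add.
  split.
    apply/subsetP => f fF; rewrite !inE; case: (eqVneq f (i, j)) => //= ne.
    by apply: (subsetP FS); rewrite !inE ne fF.
  split.
    move=> i' i'V; case: (eqVneq i' i) => [->|ne].
      by rewrite degA_add1 ?di //; apply: noij.
    by rewrite degA_addo // dA // !inE ne.
  move=> j' j'V; case: (eqVneq j' j) => [->|ne].
    rewrite degC_add; last exact: noij.
    by rewrite dC // /upd eqxx prednK // epos.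
  by rewrite degC_addo // dC // /upd (negbTE ne).
rewrite card_in_imset // => t1 t2 t1S t2S E.
by rewrite -(setU1K (noij _ t1S j)) E setU1K //; apply: noij.
Qed.
End G.

Section Swap.
Variables A B : finType.
Implicit Types (t F : {set A * B}) (Va : {set A}) (Vc : {set B}).

Definition swT t : {set B * A} := [set q | (q.2, q.1) \in t].
Definition swV (x : A + B) : B + A := match x with inl i => inr i | inr j => inl j end.
End Swap.
Arguments swV {A B}. Arguments swT {A B}.
Lemma swVK (A B : finType) : cancel (@swV A B) (@swV B A). Proof. by case. Qed.
Lemma swTK (A B : finType) (t : {set A * B}) : swT (swT t) = t. Proof. by apply/setP => -[a b]; rewrite !inE. Qed.
Section Swap2.
Variables A B : finType.
Implicit Types (t F : {set A * B}) (Va : {set A}) (Vc : {set B}).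

Lemma gadj_sw t x y : gadj (swT t) (swV x) (swV y) = gadj t x y.
Proof. by case: x y => [a|b] [a'|b'] //=; rewrite inE. Qed.

Lemma tree_sw Va Vc t : gtree Va Vc t -> gtree Vc Va (swT t).
Proof.
case=> S C Ac.
have E : relpre swV (gadj (swT t)) =2 gadj t by move=> x y; exact: gadj_sw.
split.
- apply/subsetP => -[j i]; rewrite !inE /= => /(subset_edge S) [-> ->] //.
- move=> x y xV yV; rewrite -(@swVK B A x) -(@swVK B A y).
  have /connectP [p pp Ep] : connect (gadj t) (swV x) (swV y).
    by apply: C; [case: x xV | case: y yV].
  apply/connectP; exists (map swV p); first by rewrite path_map (eq_path E).
  by rewrite last_map Ep.
- move=> p up sp; rewrite -(mapK (@swVK B A) p) cycle_map (eq_cycle E).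
  apply: Ac; first by rewrite map_inj_uniq //; exact: (can_inj (@swVK B A)).
  by rewrite size_map.
Qed.

Lemma degA_sw t j : degA (swT t) j = degC t j.
Proof. by rewrite /degA /degC; apply: eq_card => i; rewrite !inE. Qed.
Lemma degC_sw t i : degC (swT t) i = degA t i.
Proof. by rewrite /degA /degC; apply: eq_card => j; rewrite !inE. Qed.

Lemma mem_sw Va Vc d e F t : t \in gS Va Vc d e F -> swT t \in gS Vc Va e d (swT F).
Proof.
move/gSP => [T [FS [dA dC]]]; apply/gSP; split; first exact: tree_sw.
split; first by apply/subsetP => -[j i]; rewrite !inE; apply: (subsetP FS).
by split => x xV; rewrite ?degA_sw ?degC_sw; [apply: dC | apply: dA].
Qed.

End Swap2.

Section Swap3.
Variables A B : finType.
Lemma card_sw (Va : {set A}) (Vc : {set B}) d e (F : {set A * B}) : #|gS Va Vc d e F| = #|gS Vc Va e d (swT F)|.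
Proof.
have -> : gS Vc Va e d (swT F) = swT @: gS Va Vc d e F.
  apply/setP => t'; apply/idP/imsetP.
    move=> /(@mem_sw B A); rewrite swTK => h; exists (swT t') => //; by rewrite swTK.
  by case=> t tS ->; apply: mem_sw.
by rewrite card_imset //; apply: (can_inj (@swTK A B)).
Qed.

Lemma swT1 (k : A) (m : B) : swT [set (k, m)] = [set (m, k)].
Proof. by apply/setP => -[a b]; rewrite !inE !xpair_eqE andbC. Qed.
Lemma swT0 : swT (set0 : {set A * B}) = set0.
Proof. by apply/setP => -[a b]; rewrite !inE. Qed.
End Swap3.

Section Part2.
Local Open Scope ring_scope.

Definition Nf (A B : finType) (Va : {set A}) (Vc : {set B}) (d : A -> nat) (e : B -> nat) : rat :=
  ((#|Va|.-1)`!)%:R * ((#|Vc|.-1)`!)%:R * \prod_(i in Va) ((d i)%:R / ((d i)`!)%:R)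
   * \prod_(j in Vc) ((e j)%:R / ((e j)`!)%:R).

Definition Rf (a c dk em : nat) : rat :=
  if (1 < a)%N && (1 < c)%N then 1 - ((a%:R - em%:R) * (c%:R - dk%:R)) / ((a%:R - 1) * (c%:R - 1)) else 1.

Lemma fact_neq0 n : (n`!)%:R != 0 :> rat.
Proof. by rewrite pnatr_eq0 -lt0n fact_gt0. Qed.

Lemma Nf_leaf (A B : finType) (Va : {set A}) (Vc : {set B}) d e i j :
  i \in Va -> d i = 1%N -> (1 < #|Va|)%N -> j \in Vc -> (0 < e j)%N ->
  Nf (Va :\ i) Vc d (upd e j) = Nf Va Vc d e * ((e j)%:R - 1) / (#|Va|%:R - 1).
Proof.
move=> iV di a2 jV ej.
rewrite /Nf (cardsD1 i Va) iV /= in a2 *.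
case: #|Va :\ i| a2 => [|a] // _.
rewrite (big_setD1 _ iV) /= di (big_setD1 _ jV) /= [in RHS](big_setD1 _ jV) /=.
rewrite /upd eqxx.
rewrite (eq_bigr (fun j' => (e j')%:R / ((e j')`!)%:R)); last first.
  by move=> j'; rewrite !inE => /andP [/negbTE -> _].
case: (e j) ej => [|n] // _ /=.
set P1 := \prod_(i in _) _; set P2 := \prod_(i in _) _.
rewrite !factS !natrM.
have h1 := fact_neq0 n; have h2 := fact_neq0 a.
rewrite add1n fact0 !mulr1 !mulrSr.
field.
by rewrite addrK h1 !natr1 !pnatr_eq0.
Qed.

Lemma natr_m1_neq0 k : (1 < k)%N -> k%:R - 1 != 0 :> rat.
Proof. by case: k => [|[|k]] // _; rewrite -natr1 addrK pnatr_eq0. Qed.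

Lemma natrS1 k : k.+1%:R - 1 = k%:R :> rat.
Proof. by rewrite -natr1 addrK. Qed.

Lemma sum_em1 (B : finType) (Vc : {set B}) (e : B -> nat) s :
  (\sum_(j in Vc) e j)%N = s -> \sum_(j in Vc) ((e j)%:R - 1) = s%:R - #|Vc|%:R :> rat.
Proof. by move=> H; rewrite sumrB -natr_sum H sumr_const. Qed.

Lemma alg_sum (B : finType) (Vc : {set B}) (e : B -> nat) m (a' c dk n : nat) (N : rat) :
  m \in Vc -> (forall j, j \in Vc -> 0 < e j)%N -> #|Vc| = c -> (0 < c)%N -> (0 < a')%N ->
  (\sum_(j in Vc) e j)%N = n -> n = (a' + c)%N -> (a' = 1%N -> dk = c) ->
  \sum_(j in Vc) (N * ((e j)%:R - 1) / (a'.+1%:R - 1) * Rf a' c dk (upd e j m))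
    = N * Rf a'.+1 c dk (e m).
Proof.
move=> mV epos cE c0 a0 se nE a1.
have ha : a'%:R != 0 :> rat by rewrite pnatr_eq0 -lt0n.
have base : \sum_(j in Vc) (N * ((e j)%:R - 1) / (a'.+1%:R - 1)) = N.
  rewrite -mulr_suml -mulr_sumr (sum_em1 se) cE nE natrD addrK natrS1.
  by field.
rewrite natrS1 in base *.
case: (leqP c 1) => c1.
  have -> : c = 1%N by lia.
  rewrite /Rf /= ltnn !andbF mulr1 -[RHS]base; apply: eq_bigr => j _; by rewrite mulr1.
case: (leqP a' 1) => a2.
  have ea : a' = 1%N by lia.
  rewrite /Rf ea /= c1 (a1 ea) subrr mulr0 mul0r subr0 mulr1.
  by rewrite -{2}base; apply: eq_bigr => j _; rewrite ea mulr1.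
set X := (c%:R - dk%:R) / ((a'%:R - 1) * (c%:R - 1)) : rat.
have hc := natr_m1_neq0 c1; have ha1 := natr_m1_neq0 a2.
rewrite (eq_bigr (fun j => N / a'%:R * (1 - (a'%:R - (e m)%:R) * X) * ((e j)%:R - 1)
          - N / a'%:R * X * ((j == m)%:R * ((e j)%:R - 1)))); last first.
  move=> j jV; rewrite /Rf /upd a2 c1 /= -/X.
  case: (eqVneq j m) => [->|ne]; last first.
    by rewrite /X /= mulr0n mul0r mulr0 subr0; field; rewrite hc ha1 ha.
  rewrite /=.
  have -> : ((e m).-1)%:R = (e m)%:R - 1 :> rat.
    by rewrite -natrS1 prednK // epos.
  by rewrite /X mulr1n mul1r; field; rewrite hc ha1 ha.
rewrite sumrB -!mulr_sumr (sum_em1 se) cE nE natrD addrK.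
rewrite (bigD1 m mV) /= eqxx big1 ?addr0; last first.
  by move=> j /andP [_ /negbTE ->]; rewrite mul0r.
rewrite /Rf ltnS a0 c1 /= natrS1 /X.
by rewrite -natr1; field; rewrite hc ha1 ha.
Qed.

Definition claim (n : nat) := forall (A B : finType) (Va : {set A}) (Vc : {set B})
  (d : A -> nat) (e : B -> nat),
  (#|Va| + #|Vc| = n)%N -> (0 < #|Va|)%N -> (0 < #|Vc|)%N ->
  (\sum_(i in Va) d i = n.-1)%N -> (\sum_(j in Vc) e j = n.-1)%N ->
  (#|gS Va Vc d e set0|%:R = Nf Va Vc d e) /\
  (forall k m, k \in Va -> m \in Vc ->
     #|gS Va Vc d e [set (k, m)]|%:R = Nf Va Vc d e * Rf #|Va| #|Vc| (d k) (e m)).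

Lemma gS_out (A B : finType) (Va : {set A}) (Vc : {set B}) d e k m :
  k \notin Va -> #|gS Va Vc d e [set (k, m)]| = 0%N.
Proof.
move=> kV; apply/eqP; rewrite cards_eq0; apply/eqP/setP => t; rewrite in_set0.
apply/negP => /gSP [[S _ _] [FS _]].
have /(subset_edge S) [] := subsetP FS (k, m) (set11 _).
by rewrite (negbTE kV).
Qed.

Lemma set1D1 (T : finType) (x y : T) : x != y -> [set x] :\ y = [set x].
Proof.
move=> ne; apply/setP => z; rewrite !inE; case: (eqVneq z x) => [->|]; by rewrite ?ne ?andbF.
Qed.

Lemma sum_upd (B : finType) (Vc : {set B}) (e : B -> nat) j :
  j \in Vc -> (0 < e j)%N -> (\sum_(j' in Vc) upd e j j' = (\sum_(j' in Vc) e j').-1)%N.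
Proof.
move=> jV ej; rewrite !(big_setD1 _ jV) /upd eqxx.
rewrite (eq_bigr e) //; last by move=> j' /setD1P [/negbTE -> _].
by case: (e j) ej.
Qed.

Lemma stepA n : claim n -> forall (A B : finType) (Va : {set A}) (Vc : {set B}) d e i,
  (#|Va| + #|Vc| = n.+1)%N -> (1 < #|Va|)%N -> (0 < #|Vc|)%N ->
  (\sum_(i in Va) d i = n)%N -> (\sum_(j in Vc) e j = n)%N ->
  (forall j, j \in Vc -> 0 < e j)%N -> i \in Va -> d i = 1%N ->
  (#|gS Va Vc d e set0|%:R = Nf Va Vc d e) /\
  (forall k m, k \in Va -> m \in Vc ->
     #|gS Va Vc d e [set (k, m)]|%:R = Nf Va Vc d e * Rf #|Va| #|Vc| (d k) (e m)).
Proof.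
move=> IH A B Va Vc d e i Hn a2 c1 sd se epos iV di.
have ca : #|Va| = (#|Va :\ i|).+1 by rewrite (cardsD1 i Va) iV.
have sd' : (\sum_(i' in Va :\ i) d i' = n.-1)%N.
  by move: sd; rewrite (big_setD1 _ iV) di /= => <-.
have IHj : forall j, j \in Vc -> _ := fun j jV => IH A B (Va :\ i) Vc d (upd e j)
   ltac:(lia) ltac:(lia) c1 sd' ltac:(rewrite sum_upd // ?se //; exact: epos).
have ha1 : #|Va|%:R - 1 != 0 :> rat by apply: natr_m1_neq0.
have nE : n%:R = #|Va|%:R + #|Vc|%:R - 1 :> rat.
  by apply/eqP; rewrite eq_sym subr_eq natr1 -natrD Hn.
split.
  rewrite (count_leafA _ iV di epos) natr_sum.
  rewrite (eq_bigr (fun j => Nf Va Vc d e * ((e j)%:R - 1) / (#|Va|%:R - 1))); last first.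
    by move=> j jV; rewrite set0D (proj1 (IHj j jV)) Nf_leaf // epos.
  rewrite -mulr_suml -mulr_sumr (sum_em1 se) nE.
  by field.
move=> k m kV mV.
rewrite (count_leafA _ iV di epos) natr_sum.
case: (eqVneq k i) => [ek|nek].
  subst k.
  rewrite (bigD1 m mV) /= big1; last first.
    move=> j /andP [_ ne]; rewrite set1D1 ?gS_out //.
      by rewrite !inE eqxx.
    by rewrite xpair_eqE eqxx /= eq_sym.
  rewrite addr0 setDv (proj1 (IHj m mV)) Nf_leaf ?epos // di /Rf a2 /=.
  case: (leqP #|Vc| 1) => c2 /=.
    have cV : Vc :\ m = set0.
      apply/eqP; rewrite -cards_eq0; move: (cardsD1 m Vc); rewrite mV; lia.
    move: se; rewrite (big_setD1 _ mV) cV big_set0 /= addn0 => ->.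
    rewrite nE (_ : #|Vc| = 1%N); last by lia.
    by rewrite addrK; field.
  have hc := natr_m1_neq0 c2.
  by field; rewrite ha1 hc.
rewrite (eq_bigr (fun j => Nf Va Vc d e * ((e j)%:R - 1) / (#|Va :\ i|.+1%:R - 1)
           * Rf #|Va :\ i| #|Vc| (d k) (upd e j m))); last first.
  move=> j jV; rewrite set1D1; last by rewrite xpair_eqE negb_and nek.
  rewrite (proj2 (IHj j jV) k m) //; last by rewrite !inE nek.
  by rewrite Nf_leaf ?epos // ca.
rewrite ca; apply: (alg_sum _ mV epos erefl c1) => //.
- lia.
- rewrite se; lia.
- move=> a1; move: sd'; rewrite (big_setD1 _ (_ : k \in Va :\ i)); last by rewrite !inE nek.
  have -> : (Va :\ i) :\ k = set0.
    apply/eqP; rewrite -cards_eq0; move: (cardsD1 k (Va :\ i)); rewrite !inE nek kV; lia.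
  rewrite big_set0 /= addn0; lia.
Qed.

Lemma Nf_sw (A B : finType) (Va : {set A}) (Vc : {set B}) d e : Nf Vc Va e d = Nf Va Vc d e.
Proof. rewrite /Nf; ring. Qed.

Lemma Rf_sw a c dk em : Rf a c dk em = Rf c a em dk.
Proof. by rewrite /Rf andbC; case: ifP => // _; rewrite [X in X / _]mulrC [X in _ / X]mulrC. Qed.

Lemma Nf_zeroA (A B : finType) (Va : {set A}) (Vc : {set B}) d e i :
  i \in Va -> d i = 0%N -> Nf Va Vc d e = 0.
Proof. by move=> iV di; rewrite /Nf (big_setD1 _ iV) di /= !mul0r !mulr0 !mul0r. Qed.

Lemma gS_zeroA (A B : finType) (Va : {set A}) (Vc : {set B}) d e F i :
  i \in Va -> d i = 0%N -> (0 < #|Vc|)%N -> #|gS Va Vc d e F| = 0%N.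
Proof.
move=> iV di /card_gt0P [j0 j0V]; apply/eqP; rewrite cards_eq0; apply/eqP/setP => t.
rewrite in_set0; apply/negP => /gSP [T [_ [dA _]]].
have [j ij] := deg_posA T iV j0V.
have := dA i iV; rewrite di /degA => /eqP; rewrite cards_eq0 => /eqP E.
by have := in_set0 j; rewrite -E inE ij.
Qed.

Lemma gadj0 (A B : finType) x y : gadj (set0 : {set A * B}) x y = false.
Proof. by case: x y => [a|b] [a'|b'] //=; rewrite inE. Qed.

Lemma gS_single (A B : finType) (j0 : B) d e : e j0 = 0%N ->
  #|gS (set0 : {set A}) [set j0] d e set0| = 1%N.
Proof.
move=> ej; apply/eqP/cards1P; exists set0; apply/setP => t; rewrite [RHS]inE.
apply/gSP/eqP.
  case=> [[S _ _] _]; apply/eqP; rewrite -subset0; apply: (subset_trans S).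
  by apply/subsetP => -[a b]; rewrite !inE.
move=> ->; split; last split; last split.
- split; first exact: sub0set.
    by case=> [a|b] [a'|b'] //=; rewrite ?inE // => /eqP -> /eqP ->.
  by move=> [|x [|y p]] //= _ _; rewrite gadj0.
- exact: sub0set.
- by move=> i; rewrite inE.
- move=> j; rewrite inE => /eqP ->; rewrite ej /degC; apply/eqP; rewrite cards_eq0.
  by apply/eqP/setP => i; rewrite !inE.
Qed.

Lemma leaf_exists (A B : finType) (Va : {set A}) (Vc : {set B}) d e n :
  (#|Va| + #|Vc| = n.+1)%N -> (2 < n.+1)%N ->
  (\sum_(i in Va) d i = n)%N -> (\sum_(j in Vc) e j = n)%N ->
  (forall i, i \in Va -> 0 < d i)%N -> (forall j, j \in Vc -> 0 < e j)%N ->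
  (exists2 i, i \in Va & (d i = 1%N /\ (1 < #|Va|)%N)) \/
  (exists2 j, j \in Vc & (e j = 1%N /\ (1 < #|Vc|)%N)).
Proof.
move=> Hn n2 sd se dp ep.
have sA : (forall i, i \in Va -> d i != 1%N) -> (2 * #|Va| <= n)%N.
  move=> H; rewrite -sd mulnC -sum_nat_const; apply: leq_sum => i iV.
  by have := dp i iV; have := H i iV; case: (d i) => [|[|]].
have sB : (forall j, j \in Vc -> e j != 1%N) -> (2 * #|Vc| <= n)%N.
  move=> H; rewrite -se mulnC -sum_nat_const; apply: leq_sum => j jV.
  by have := ep j jV; have := H j jV; case: (e j) => [|[|]].
case: (boolP [exists i in Va, d i == 1%N]) => [/exists_inP [i iV /eqP di]| /exists_inP nA];
case: (boolP [exists j in Vc, e j == 1%N]) => [/exists_inP [j jV /eqP ej]| /exists_inP nB].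
- case: (leqP #|Va| 1) => a1; last by left; exists i.
  case: (leqP #|Vc| 1) => c1; last by right; exists j.
  lia.
- have := sB (fun j jV => introN eqP (fun h => nB (ex_intro2 _ _ j jV (introT eqP h)))).
  move=> h; left; exists i => //; split => //; lia.
- have := sA (fun i iV => introN eqP (fun h => nA (ex_intro2 _ _ i iV (introT eqP h)))).
  move=> h; right; exists j => //; split => //; lia.
- have := sA (fun i iV => introN eqP (fun h => nA (ex_intro2 _ _ i iV (introT eqP h)))).
  have := sB (fun j jV => introN eqP (fun h => nB (ex_intro2 _ _ j jV (introT eqP h)))).
  lia.
Qed.

Lemma claim_all n : claim n.
Proof.
elim: n => [|n IH] A B Va Vc d e Hn a0 c0 sd se; first lia.
rewrite /= in sd se.
have [n1 | n2] : (n.+1 = 2)%N \/ (2 < n.+1)%N by lia.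
  have /cards1P [i0 Ei] : #|Va| == 1%N by apply/eqP; lia.
  have /cards1P [j0 Ej] : #|Vc| == 1%N by apply/eqP; lia.
  subst Va Vc.
  have di : d i0 = 1%N by move: sd; rewrite big_set1; lia.
  have ej : e j0 = 1%N by move: se; rewrite big_set1; lia.
  have Nf1 : Nf [set i0] [set j0] d e = 1.
    by rewrite /Nf !cards1 !big_set1 di ej (_ : (0`!)%:R = 1 :> rat) // (_ : (1`!)%:R = 1 :> rat) //.
  have cnt : forall F, F :\ (i0, j0) = set0 -> #|gS [set i0] [set j0] d e F| = 1%N.
    move=> F HF; rewrite (count_leafA F (set11 i0) di); last first.
      by move=> j; rewrite inE => /eqP ->; rewrite ej.
    by rewrite big_set1 setDv HF gS_single // /upd eqxx ej.
  split; first by rewrite cnt ?set0D // Nf1.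
  move=> k m; rewrite !inE => /eqP -> /eqP ->.
  by rewrite cnt ?setDv // Nf1 cards1 /Rf /= mul1r.
case: (boolP [exists i in Va, d i == 0%N]) => [/exists_inP [i iV /eqP di]|/exists_inP nd].
  by split; [| move=> k m _ _]; rewrite (@gS_zeroA _ _ _ _ _ _ _ _ iV di c0) (@Nf_zeroA _ _ _ _ _ _ _ iV di) ?mul0r.
case: (boolP [exists j in Vc, e j == 0%N]) => [/exists_inP [j jV /eqP ej]|/exists_inP ne].
  by split; [| move=> k m _ _]; rewrite card_sw (@gS_zeroA _ _ _ _ _ _ _ _ jV ej a0) -Nf_sw (@Nf_zeroA _ _ _ _ _ _ _ jV ej) ?mul0r.
have dp : forall i, i \in Va -> (0 < d i)%N.
  by move=> i iV; rewrite lt0n; apply/negP => /eqP h; apply: nd; exists i => //; apply/eqP.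
have ep : forall j, j \in Vc -> (0 < e j)%N.
  by move=> j jV; rewrite lt0n; apply/negP => /eqP h; apply: ne; exists j => //; apply/eqP.
case: (leaf_exists Hn n2 sd se dp ep) => [[i iV [di a2]] | [j jV [ej c2]]].
  exact: (@stepA n IH A B Va Vc d e i Hn a2 c0 sd se ep iV di).
have [H1 H2] := @stepA n IH B A Vc Va e d j ltac:(lia) c2 a0 se sd dp jV ej.
split; first by rewrite card_sw swT0 H1 Nf_sw.
by move=> k m kV mV; rewrite card_sw swT1 (H2 m k mV kV) Nf_sw Rf_sw.
Qed.

End Part2.

Lemma dvd_prod_fact (I : finType) (f : I -> nat) : \prod_i (f i)`! %| (\sum_i f i)`!.
Proof.
elim/big_rec2: _ => [//|i y x _ H].
rewrite -[X in _ %| X]/((f i + y)`!) -(bin_fact (leq_addr y (f i))) addKn.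
by apply: dvdn_mull; apply: dvdn_mul (dvdnn _) H.
Qed.

Local Open Scope ring_scope.

Lemma multinom_eq (I : finType) n (k : I -> nat) : (\sum_i k i = n + #|I|)%N ->
  ((multinom n (fun i => Posz (k i) - 1))%:R : rat) = (n`!)%:R * \prod_i ((k i)%:R / ((k i)`!)%:R).
Proof.
move=> sk.
case: (boolP [exists i, k i == 0%N]) => [/existsP [i /eqP ki] | /existsPn nz].
  rewrite /multinom.
  have -> : [forall i, (0 <= Posz (k i) - 1)%R] = false.
    by apply/negbTE/forallPn; exists i; rewrite ki.
  by rewrite /= [X in _ = _ * X](bigD1 i) //= ki mul0r mulr0.
have E : (fun i => Posz (k i) - 1) = (fun i => Posz (k i).-1).
  apply: funext => i; have := nz i; case: (k i) => //= n' _.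
  by rewrite -[n'.+1]addn1 PoszD addrK.
rewrite E /multinom.
have sum' : (\sum_i (k i).-1 = n)%N.
  apply/eqP; rewrite -(eqn_add2r #|I|) -sk -sum1_card -big_split /=.
  by apply/eqP; apply: eq_bigr => i _; move: (nz i); case: (k i) => // s _; rewrite addn1.
rewrite ifT; last first.
  apply/andP; split; first by apply/forallP.
  by rewrite -(big_morph Posz PoszD (erefl (Posz 0))) sum'.
have dv : (\prod_i ((k i).-1)`! %| n`!)%N by rewrite -sum'; apply: dvd_prod_fact.
rewrite /= natr_div //; last first.
  by rewrite unitfE pnatr_eq0 -lt0n prodn_gt0 // => i; rewrite fact_gt0.
rewrite natr_prod -prodfV; congr (_ * _); apply: eq_bigr => i _.
have := nz i; case: (k i) => //= s _.
rewrite factS natrM; have := fact_neq0 s; move=> h.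
by field; rewrite h addrC natr1 pnatr_eq0.
Qed.

Lemma S_set_eq (b w : nat) (d : 'I_b.+1 -> nat) (e : 'I_w.+1 -> nat) k m :
  S_set d e k m = gS [set: 'I_b.+1] [set: 'I_w.+1] d e [set (k, m)].
Proof.
apply/setP => t; rewrite !inE; apply/asboolP/asboolP.
  case=> [[C Ac] [km [dA dC]]]; split.
    split => //; first by apply/subsetP => -[a b']; rewrite !inE.
    by move=> x y _ _; exact: C.
  by split; [rewrite sub1set | split => x _; [exact: dA | exact: dC]].
case=> [[_ C Ac] [km [dA dC]]]; split.
  by split => //; move=> x y; apply: C; [case: x | case: y] => ? /=; rewrite in_setT.
by split; [rewrite -sub1set | split => x; [exact: dA | exact: dC]].
Qed.

Lemma prod_setT (T : finType) (F : T -> rat) : \prod_(i in [set: T]) F i = \prod_i F i.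
Proof. by apply: eq_bigl => i; rewrite in_setT. Qed.

Close Scope ring_scope.

Theorem lemmaB2 (b w : nat) (d : 'I_b.+1 -> nat) (e : 'I_w.+1 -> nat)
    (k : 'I_b.+1) (m : 'I_w.+1) :
  (\sum_i d i)%N = (b + w + 1)%N ->
  (\sum_j e j)%N = (b + w + 1)%N ->
  (#|S_set d e k m|%:R : rat) =
    ((multinom b (fun j => (Posz (e j) - 1)%R))%:R *
     (multinom w (fun i => (Posz (d i) - 1)%R))%:R *
     (if (0 < w)%N && (0 < b)%N then
        1 - ((b%:R - (e m)%:R + 1) * (w%:R - (d k)%:R + 1)) / (b%:R * w%:R)
      else 1))%R.
Proof.
move=> sd se.
have sdT : (\sum_(i in [set: 'I_b.+1]) d i = b + w + 1)%N.
  by rewrite -sd; apply: eq_bigl => i; rewrite in_setT.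
have seT : (\sum_(j in [set: 'I_w.+1]) e j = b + w + 1)%N.
  by rewrite -se; apply: eq_bigl => i; rewrite in_setT.
have cb : #|[set: 'I_b.+1]| = b.+1 by rewrite cardsT card_ord.
have cw : #|[set: 'I_w.+1]| = w.+1 by rewrite cardsT card_ord.
have [_ H] := @claim_all (b.+1 + w.+1) _ _ [set: 'I_b.+1] [set: 'I_w.+1] d e
  ltac:(rewrite cb cw //) ltac:(rewrite cb //) ltac:(rewrite cw //)
  ltac:(rewrite sdT; lia) ltac:(rewrite seT; lia).
rewrite S_set_eq H ?in_setT // cb cw.
rewrite (multinom_eq (k := e)); last by rewrite se card_ord; lia.
rewrite (multinom_eq (k := d)); last by rewrite sd card_ord; lia.
rewrite /Nf cb cw /=.
rewrite !prod_setT.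
have -> : Rf b.+1 w.+1 (d k) (e m) = (if (0 < w)%N && (0 < b)%N
   then 1 - (b%:R - (e m)%:R + 1) * (w%:R - (d k)%:R + 1) / (b%:R * w%:R) else 1)%R.
  rewrite /Rf !ltnS andbC; case: ifP => // _; rewrite !natrS1 -!natr1.
  by congr (1 - _ / _)%R; ring.
set R := (if _ then _ else _); set P1 := (\prod_i _)%R; set P2 := (\prod_i _)%R; ring.
Qed.
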